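(* Consider an instance of the Submodular Prophet Inequality problem with non-negative submodular objective $f:2^{\mathcal{U}}\to\mathbb{R}_{\ge0}$ and constraint $(\mathcal{N},\mathcal{I})$, and let $\mathcal{P}$ be a polyhedral relaxation of $(\mathcal{N},\mathcal{I})$. Then \[\max_{\bm{z}\in\mathcal{P}''} f^+(\bm{z})\ \ge\ \mathrm{OPT}.\]
   Context: Submodular Prophet Inequality instance: $\mathcal{N}=[n]$; independent random variables $X_1,\dots,X_n$, $X_i$ taking values in a finite set $\mathcal{U}_i$ with distribution $D_i$; the $\mathcal{U}_i$ are pairwise disjoint, $\mathcal{U}=\bigcup_i\mathcal{U}_i$, $\mathcal{D}(e)=D_i(e)=\Pr[X_i=e]$ for $e\in\mathcal{U}_i$; $f$ is non-negative submodular ($f(A)+f(B)\ge f(A\cup B)+f(A\cap B)$, $f(\emptyset)=0$); $\mathcal{I}\subseteq2^{\mathcal{N}}$ is downward-closed. Prophet's value $\mathrm{OPT}=\mathbb{E}[\max_{T\in\mathcal{I}}f(\{X_i:i\in T\})]$. A polyhedral relaxation is a convex polytope $\mathcal{P}\subseteq[0,1]^{\mathcal{N}}$ containing $\mathbf{1}_T$ for all $T\in\mathcal{I}$. $\mathcal{P}'=\{\bm{y}\in[0,1]^{\mathcal{U}}:\exists\bm{x}\in\mathcal{P},\ \sum_{e\in\mathcal{U}_i}y_e=x_i\ \forall i\}$, $\mathcal{P}''=\{\bm{z}\in\mathcal{P}':z_e\le\mathcal{D}(e)\ \forall e\in\mathcal{U}\}$. Concave closure: $f^+(\bm{z})=\max\{\sum_{S\subseteq\mathcal{U}}a_Sf(S):a_S\ge0,\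 \sum_Sa_S=1,\ \sum_Sa_S\mathbf{1}_S=\bm{z}\}$. *)

(* Defs.v *)
From HB Require Import structures.
From mathcomp Require Import all_boot all_order all_algebra.
From mathcomp Require Import boolp classical_sets reals.
Set Implicit Arguments. Unset Strict Implicit. Unset Printing Implicit Defensive.
Import Order.TTheory GRing.Theory Num.Theory.
Local Open Scope ring_scope.
Local Open Scope classical_set_scope.

(* Ground set U : finType; owner e = the index i with e \in U_i.
   Thus U_i := [set e | owner e == i] are pairwise disjoint and cover U. *)

Definition nonneg_submodular (R : realType) (U : finType) (f : {set U} -> R) : Prop :=
  f finset.set0 = 0 /\ (forall S, 0 <= f S) /\
  (forall A B : {set U}, f (A :|: B) + f (A :&: B) <= f A + f B).

(* Independent distributions D_i on U_i: D e = Pr[X_{owner e} = e]. *)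
Definition distributions (R : realType) (n : nat) (U : finType)
  (owner : U -> 'I_n) (D : U -> R) : Prop :=
  (forall e, 0 <= D e) /\ (forall i : 'I_n, \sum_(e | owner e == i) D e = 1).

Definition downward_closed (n : nat) (I : {set {set 'I_n}}) : Prop :=
  finset.set0 \in I /\ (forall A B : {set 'I_n}, B \in I -> A \subset B -> A \in I).

Definition convex_polytope (R : realType) (n : nat) (P : set ('I_n -> R)) : Prop :=
  exists (m : nat) (v : 'I_m -> 'I_n -> R),
    P = [set x | exists lam : 'I_m -> R,
                  (forall k, 0 <= lam k) /\ \sum_k lam k = 1 /\
                  (forall i, x i = \sum_k lam k * v k i)].

Definition indicator (R : realType) (n : nat) (T : {set 'I_n}) : 'I_n -> R :=
  fun i => (i \in T)%:R.

Definition polyhedral_relaxation (R : realType) (n : nat)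
  (I : {set {set 'I_n}}) (P : set ('I_n -> R)) : Prop :=
  convex_polytope P /\
  (forall x, P x -> forall i, 0 <= x i <= 1) /\
  (forall T, T \in I -> P (indicator R T)).

Definition Pprime (R : realType) (n : nat) (U : finType) (owner : U -> 'I_n)
  (P : set ('I_n -> R)) : set (U -> R) :=
  [set y | (forall e, 0 <= y e <= 1) /\
           exists x, P x /\ forall i, \sum_(e | owner e == i) y e = x i].

Definition Psecond (R : realType) (n : nat) (U : finType) (owner : U -> 'I_n)
  (D : U -> R) (P : set ('I_n -> R)) : set (U -> R) :=
  [set z | Pprime owner P z /\ forall e, z e <= D e].

(* Concave closure f^+ (the max of the LP, written as the sup of its values). *)
Definition concave_closure (R : realType) (U : finType) (f : {set U} -> R)
  (z : U -> R) : R :=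
  sup [set v | exists a : {set U} -> R,
         (forall S, 0 <= a S) /\ \sum_S a S = 1 /\
         (forall e, \sum_S a S * (e \in S)%:R = z e) /\
         v = \sum_S a S * f S].

(* Prophet's value: E[max_{T in I} f({X_i : i in T})], X_i independent
   with laws D_i; a realization is r : 'I_n -> U with owner (r i) = i,
   having probability prod_i D (r i). *)
Definition OPT (R : realType) (n : nat) (U : finType) (owner : U -> 'I_n)
  (D : U -> R) (f : {set U} -> R) (I : {set {set 'I_n}}) : R :=
  \sum_(r : {ffun 'I_n -> U} | [forall i, owner (r i) == i])
     (\prod_i D (r i)) * \big[Num.max/0]_(T in I) f (r @: T).

(* Main.v *)
Set Warnings "-notation-overridden,-ambiguous-paths,-notation-incompatible-prefix,-deprecated".

Require Import Defs.
From HB Require Import structures.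
From mathcomp Require Import all_boot all_order all_algebra.
From mathcomp Require Import boolp classical_sets reals.
From mathcomp Require Import all_classical all_reals all_analysis.
Import Order.TTheory GRing.Theory Num.Theory numFieldTopology.Exports numFieldNormedType.Exports.
Local Open Scope ring_scope.
Local Open Scope classical_set_scope.
Lemma cont_sum (R : realType) (T : topologicalType) (I : Type) (s : seq I)
  (P : pred I) (F : I -> T -> R) :
  (forall i, continuous (F i)) -> continuous (fun w => \sum_(i <- s | P i) F i w).
Proof.
move=> Fc; elim: s => [|x s IH].
  rewrite (_ : (fun w => _) = (fun=> 0)); last by apply: funext => w; rewrite big_nil.
  exact: cst_continuous.
rewrite (_ : (fun w => _) = (fun w => if P x then F x w + \sum_(i <- s | P i) F i w else \sum_(i <- s | P i) F i w)); last by apply: funext => w; rewrite big_cons.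
case: (P x) => //.
move=> w; exact: (continuousD (Fc x w) (IH w)).
Qed.

Lemma closed_le_fun (R : realType) (T : topologicalType) (g h : T -> R) :
  continuous g -> continuous h -> closed [set w | g w <= h w].
Proof.
move=> gc hc.
have -> : [set w | g w <= h w] = (fun w => h w - g w) @^-1` [set x | 0 <= x].
  by apply/seteqP; split => w /=; rewrite subr_ge0.
apply: preimage_closed; last exact: closed_ge.
move=> w _; exact: (continuousB (hc w) (gc w)).
Qed.

Lemma closed_eq_fun (R : realType) (T : topologicalType) (g h : T -> R) :
  continuous g -> continuous h -> closed [set w | g w = h w].
Proof.
move=> gc hc.
have -> : [set w | g w = h w] = [set w | g w <= h w] `&` [set w | h w <= g w].
  by apply/seteqP; split => w /=; [move=> ->; rewrite lexx|case=> *; apply/eqP; rewrite eq_le; apply/andP].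
by apply: closedI; apply: closed_le_fun.
Qed.

Lemma closed_forall (T : topologicalType) (J : Type) (A : J -> set T) :
  (forall j, closed (A j)) -> closed [set w | forall j, A j w].
Proof.
move=> Ac.
have -> : [set w | forall j, A j w] = \bigcap_(j in setT) A j.
  by apply/seteqP; split => w /= H j //; apply: H.
by apply: closed_bigI => j _; apply: Ac.
Qed.

Lemma le_sum1 (R : realType) (T : finType) (x : T -> R) j :
  (forall i, 0 <= x i) -> x j <= \sum_i x i.
Proof. by move=> x0; rewrite (bigD1 j) //= lerDl sumr_ge0. Qed.

Lemma opt_feasible (R : realType) (n : nat) (U : finType) (owner : U -> 'I_n)
  (D : U -> R) (f : {set U} -> R) (I : {set {set 'I_n}}) m (v : 'I_m -> 'I_n -> R) :
  distributions owner D -> nonneg_submodular f -> downward_closed I ->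
  (forall T, T \in I -> exists lam : 'I_m -> R, (forall k, 0 <= lam k) /\
      \sum_k lam k = 1 /\ (forall i, indicator R T i = \sum_k lam k * v k i)) ->
  exists (lam : 'I_m -> R) (a : {set U} -> R),
    ((forall k, 0 <= lam k) /\ \sum_k lam k = 1) /\
    ((forall B, 0 <= a B) /\ \sum_B a B = 1) /\
    ((forall e, \sum_B a B * (e \in B)%:R <= D e) /\
     (forall i, \sum_(e | owner e == i) \sum_B a B * (e \in B)%:R = \sum_k lam k * v k i)) /\
    OPT owner D f I <= \sum_B a B * f B.
Proof.
move=> [D0 D1] [f0 [fge0 _]] [I0 _] Ihull.
have HL0 : forall T : {set 'I_n}, exists lam : 'I_m -> R, T \in I ->
    (forall k, 0 <= lam k) /\ \sum_k lam k = 1 /\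
    (forall i, indicator R T i = \sum_k lam k * v k i).
  move=> T; case: (boolP (T \in I)) => TI; last by exists (fun=> 0).
  by have [lam H] := Ihull T TI; exists lam.
have [L HL] := boolp.choice HL0.
have HT0 : forall r : {ffun 'I_n -> U}, exists T : {set 'I_n},
    T \in I /\ \big[Num.max/0]_(T in I) f (r @: T) = f (r @: T).
  move=> r; exists [arg max_(T > finset.set0 | T \in I) f (r @: T)]%O; split.
    by case: arg_maxP.
  by apply: bigmax_eq_arg => // T _; exact: fge0.
have [Tf HT] := boolp.choice HT0.
pose valid (r : {ffun 'I_n -> U}) := [forall i, owner (r i) == i].
pose Fd i u := if owner u == i then D u else 0.
pose p (r : {ffun 'I_n -> U}) : R := \prod_i Fd i (r i).
have p0 r : 0 <= p r.
  by apply: prodr_ge0 => i _; rewrite /Fd; case: ifP.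
have pval r : p r != 0 -> valid r.
  move=> pr; apply/forallP => i; apply: contraR pr => Hi.
  by rewrite /p (bigD1 i) //= /Fd (negbTE Hi) mul0r.
have pvalid r : valid r -> p r = \prod_i D (r i).
  by move=> /forallP Hr; apply: eq_bigr => i _; rewrite /Fd Hr.
have Fd1 i : \sum_u Fd i u = 1 by rewrite -(D1 i) [RHS]big_mkcond.
have psum : \sum_r p r = 1.
  by rewrite /p -bigA_distr_bigA big1 // => i _; exact: Fd1.
have pmarg e : \sum_(r : {ffun 'I_n -> U} | r (owner e) == e) p r = D e.
  pose Q i u := (i == owner e) ==> (u == e).
  have E1 : \prod_i \sum_(u | Q i u) Fd i u = D e.
    rewrite (bigD1 (owner e)) //= [X in _ * X]big1 => [|i ie]; last first.
      by rewrite -(Fd1 i); apply: eq_bigl => u; rewrite /Q (negbTE ie).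
    rewrite mulr1 (eq_bigl (fun u => u == e)) => [|u]; last by rewrite /Q eqxx.
    by rewrite big_pred1_eq /Fd eqxx.
  rewrite -E1 bigA_distr_big_dep.
  apply: eq_bigl => r; apply/eqP/familyP => [H i|H].
    by rewrite unfold_in /Q; apply/implyP => /eqP ->; rewrite H.
  by have := H (owner e); rewrite unfold_in /Q eqxx => /eqP.
pose key (r : {ffun 'I_n -> U}) := r @: Tf r.
pose a B := \sum_r p r * (key r == B)%:R.
have asum (g : {set U} -> R) : \sum_B a B * g B = \sum_r p r * g (key r).
  rewrite /a; under eq_bigr do rewrite mulr_suml.
  rewrite exchange_big /=; apply: eq_bigr => r _.
  rewrite (bigD1 (key r)) //= eqxx mulr1 big1 ?addr0 // => B /negbTE.
  by rewrite eq_sym => ->; rewrite mulr0 mul0r.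
pose lam k := \sum_r p r * L (Tf r) k.
exists lam, a; split; [split|split; [split|split; [split|]]].
- by move=> k; apply: sumr_ge0 => r _; apply: mulr_ge0 => //; exact: (HL _ (HT r).1).1.
- rewrite /lam exchange_big /= -psum; apply: eq_bigr => r _.
  by rewrite -mulr_sumr (HL _ (HT r).1).2.1 mulr1.
- by move=> B; apply: sumr_ge0 => r _; apply: mulr_ge0.
- have := asum (fun=> 1); under eq_bigr do rewrite mulr1; move=> ->.
  by under eq_bigr do rewrite /= mulr1; exact: psum.
- move=> e; move: (asum (fun B => (e \in B)%:R)) => /= ->; rewrite -pmarg [X in _ <= X]big_mkcond /=.
  apply: ler_sum => r _.
  have [->|pr] := eqVneq (p r) 0; first by rewrite mul0r; case: ifP.
  have /forallP vr := pval r pr.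
  case He: (e \in key r); last by rewrite mulr0; case: ifP.
  move: He => /imsetP [j _ ->]; rewrite (eqP (vr j)) eqxx mulr1 //.
- move=> i.
  under eq_bigr do rewrite (asum (fun B => (_ \in B)%:R)).
  rewrite exchange_big /= /lam.
  under [RHS]eq_bigr do rewrite mulr_suml.
  rewrite [RHS]exchange_big /=; apply: eq_bigr => r _.
  rewrite -mulr_sumr.
  under [RHS]eq_bigr do rewrite -mulrA.
  rewrite -mulr_sumr -(HL _ (HT r).1).2.2.
  have [->|pr] := eqVneq (p r) 0; first by rewrite !mul0r.
  have /forallP vr := pval r pr; congr (_ * _).
  have rinj : injective r.
    by move=> j1 j2 E; rewrite -(eqP (vr j1)) -(eqP (vr j2)) E.
  rewrite /indicator (bigD1 (r i)) ?vr //= /key mem_imset // big1 ?addr0 // => e /andP [/eqP oe ne].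
  case Hk: (e \in r @: Tf r) => //.
  move: Hk => /imsetP [j _ ej]; move: ne; rewrite ej -oe ej (eqP (vr j)) eqxx //.
- rewrite (asum f) /OPT [leLHS]big_mkcond /=; apply: ler_sum => r _.
  case: ifP => vr.
    by rewrite (pvalid r vr) (HT r).2.
  have [->|pr] := eqVneq (p r) 0; first by rewrite mul0r.
  by move: (pval r pr); rewrite /valid vr.
Qed.

Theorem claim1 (R : realType) (n : nat) (U : finType) (owner : U -> 'I_n)
  (D : U -> R) (f : {set U} -> R) (I : {set {set 'I_n}})
  (P : set ('I_n -> R)) :
  distributions owner D ->
  nonneg_submodular f ->
  downward_closed I ->
  polyhedral_relaxation I P ->
  exists z, Psecond owner D P z /\
    (forall z', Psecond owner D P z' ->
       concave_closure f z' <= concave_closure f z) /\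
    OPT owner D f I <= concave_closure f z.
Proof.
move=> Hd Hf Hi [[m [v Pdef]] [P01 PI]].
have [Hf0 [fge0 _]] := Hf.
have Ihull : forall T, T \in I -> exists lam : 'I_m -> R, (forall k, 0 <= lam k) /\
      \sum_k lam k = 1 /\ (forall i, indicator R T i = \sum_k lam k * v k i).
  by move=> T /PI; rewrite Pdef => -[lam [? [? H]]]; exists lam.
have [lam0 [a0 [[l0ge l0s] [[a0ge a0s] [[z0le z0eq] optle]]]]] :=
  @opt_feasible R n U owner D f I m v Hd Hf Hi Ihull.
pose N := #|{: ('I_m + {set U})%type}|.
pose lamw (w : 'rV[R]_N) k := w ord0 (enum_rank (inl k : ('I_m + {set U})%type)).
pose aw (w : 'rV[R]_N) B := w ord0 (enum_rank (inr B : ('I_m + {set U})%type)).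
pose zw w e := \sum_B aw w B * (e \in B)%:R.
pose obj w := \sum_B aw w B * f B.
pose F1 := [set w | forall k, 0 <= lamw w k].
pose F2 := [set w | \sum_k lamw w k = 1].
pose F3 := [set w | forall B, 0 <= aw w B].
pose F4 := [set w | \sum_B aw w B = 1].
pose F5 := [set w | forall e, zw w e <= D e].
pose F6 := [set w | forall i, \sum_(e | owner e == i) zw w e = \sum_k lamw w k * v k i].
pose F := F1 `&` F2 `&` F3 `&` F4 `&` F5 `&` F6.
pose mk (lam : 'I_m -> R) (a : {set U} -> R) : 'rV[R]_N :=
  \row_j (match enum_val j with inl k => lam k | inr B => a B end).
have mkl lam a : lamw (mk lam a) = lam.
  by apply: funext => k; rewrite /lamw /mk mxE enum_rankK.
have mka lam a : aw (mk lam a) = a.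
  by apply: funext => k; rewrite /aw /mk mxE enum_rankK.
have mkF (lam : 'I_m -> R) (a : {set U} -> R) : ((forall k, 0 <= lam k) /\ \sum_k lam k = 1) ->
    ((forall B, 0 <= a B) /\ \sum_B a B = 1) ->
    ((forall e, \sum_B a B * (e \in B)%:R <= D e) /\
     (forall i, \sum_(e | owner e == i) \sum_B a B * (e \in B)%:R = \sum_k lam k * v k i)) ->
    F (mk lam a).
  move=> [? ?] [? ?] [? ?].
  by rewrite /F /F1 /F2 /F3 /F4 /F5 /F6 /zw /= mkl mka.
have w0F := mkF _ _ (conj l0ge l0s) (conj a0ge a0s) (conj z0le z0eq).
have lc k : continuous (fun w => lamw w k) by move=> w; exact: coord_continuous.
have ac B : continuous (fun w => aw w B) by move=> w; exact: coord_continuous.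
have mulc (g : 'rV[R]_N -> R) c : continuous g -> continuous (fun w => g w * c).
  by move=> gc w; apply: continuousM; [exact: gc|exact: cst_continuous].
have zc e : continuous (fun w => zw w e).
  by apply: cont_sum => B; apply: mulc.
have objc : continuous obj by apply: cont_sum => B; apply: mulc.
have Fcl : closed F.
  apply: closedI; last first.
    apply: closed_forall => i; apply: closed_eq_fun.
      exact: cont_sum.
    by apply: cont_sum => k; apply: mulc.
  apply: closedI; last first.
    by apply: closed_forall => e; apply: (@closed_le_fun R _ _ (fun=> D e)) => //; exact: cst_continuous.
  apply: closedI; last first.
    by apply: (@closed_eq_fun R _ _ (fun=> 1)); [exact: cont_sum|exact: cst_continuous].
  apply: closedI; last first.
    by apply: closed_forall => B; apply: (@closed_le_fun R _ (fun=> 0)) => //; exact: cst_continuous.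
  apply: closedI.
    by apply: closed_forall => k; apply: (@closed_le_fun R _ (fun=> 0)) => //; exact: cst_continuous.
  by apply: (@closed_eq_fun R _ _ (fun=> 1)); [exact: cont_sum|exact: cst_continuous].
have Fcomp : compact F.
  have Hc := (@rV_compact R N (fun=> `[0, 1]%classic) (fun=> @segment_compact R 0 1)).
  apply: (subclosed_compact Fcl Hc).
  move=> w [[[[[F1w F2w] F3w] F4w] _] _] j /=.
  rewrite in_itv /=.
  have := enum_valK j; case: (enum_val j) => [k|B] <-.
    apply/andP; split; first exact: F1w.
    by rewrite -F2w; apply: (@le_sum1 R _ (lamw w)).
  apply/andP; split; first exact: F3w.
  by rewrite -F4w; apply: (@le_sum1 R _ (aw w)).
have [ws /set_mem wsF wsmax] := compact_EVT_max (ex_intro _ _ w0F) Fcomp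
   (@continuous_subspaceT _ _ F obj objc).
move: (wsF) => [[[[[F1w F2w] F3w] F4w] F5w] F6w].
have ccge w : F w -> obj w <= concave_closure f (zw w).
  move=> Fw; rewrite /concave_closure.
  set E := [set _ | _].
  have hub : has_ubound E.
    exists (\sum_B f B) => y /= [a [ag [as1 [_ ->]]]].
    apply: ler_sum => B _; apply: ler_piMl => //.
    by rewrite -as1; apply: (@le_sum1 R _ a).
  apply: (ub_le_sup hub); rewrite /E /=.
  by exists (aw w); split; [exact: Fw.1.1.1.2|split; [exact: Fw.1.1.2|split]].
exists (zw ws); split; [|split].
- split; [split|].
  + move=> e; apply/andP; split.
      by apply: sumr_ge0 => B _; apply: mulr_ge0 => //; exact: F3w.
    rewrite -F4w /zw; apply: ler_sum => B _.
    by case: (e \in B); rewrite ?mulr1 ?mulr0 //; exact: F3w.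
  + exists (fun i => \sum_k lamw ws k * v k i); split; last exact: F6w.
    by rewrite Pdef; exists (lamw ws); do !split.
  + exact: F5w.
- move=> z' [[z'01 [x [Px xeq]]] z'le].
  apply: le_trans (ccge ws wsF).
  rewrite /concave_closure; set E := [set _ | _].
  case: (pselect (E !=set0)) => [En|E0].
    apply: ge_sup => // y [a [ag [as1 [az ->]]]].
    move: Px; rewrite Pdef => -[lam [lg [ls1 xl]]].
    have := wsmax (mk lam a) (mem_set (mkF lam a (conj lg ls1) (conj ag as1) _)).
    rewrite {1}/obj mka; apply.
    split; first by move=> e; rewrite az.
    by move=> i; rewrite -xl -xeq; apply: eq_bigr => e _; exact: az.
  have -> : E = set0 by apply/seteqP; split => y // Ey; apply: E0; exists y.
  rewrite sup0; apply: sumr_ge0 => B _; apply: mulr_ge0 => //; exact: F3w.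
- apply: le_trans optle _; apply: le_trans (ccge ws wsF).
  by have := wsmax _ (mem_set w0F); rewrite {1}/obj mka.
Qed.
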